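(* Let $R$ be an associative ring with identity and involution $*$, let $a\in R^{\#}\cap R^{\dagger}$ and let $x\in PE(R)$. If $x=aa^{\dagger}xa^{\dagger}a$, then $a^{\dagger}axaa^{\dagger}\in PE(R)$.
   Context: An involution on $R$ is a map $x\mapsto x^*$ with $(x^* )^*=x$, $(x+y)^*=x^*+y^*$, $(xy)^*=y^*x^*$. An element $a$ is Moore–Penrose invertible if there is $b$ with $aba=a$, $bab=b$, $(ab)^*=ab$, $(ba)^*=ba$; such $b$ is unique, denoted $a^{\dagger}$ (the paper also writes $a^+$), and $R^{\dagger}$ is the set of such $a$. An element $a$ is group invertible if there is $b$ with $aba=a$, $bab=b$, $ab=ba$; such $b$ is unique, denoted $a^{\#}$, and $R^{\#}$ is the set of such $a$. $PE(R)=\{e\in R: e^2=e=e^*\}$ is the set of projections. *)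

(* Defs.v *)
From mathcomp Require Import all_boot all_algebra.
Set Implicit Arguments. Unset Strict Implicit. Unset Printing Implicit Defensive.
Import GRing.Theory.
Local Open Scope ring_scope.

Definition involution (R : pzRingType) (star : R -> R) : Prop :=
  [/\ forall x, star (star x) = x,
      forall x y, star (x + y) = star x + star y &
      forall x y, star (x * y) = star y * star x].

Definition is_MP_inverse (R : pzRingType) (star : R -> R) (a b : R) : Prop :=
  [/\ a * b * a = a, b * a * b = b, star (a * b) = a * b & star (b * a) = b * a].

Definition MP_invertible (R : pzRingType) (star : R -> R) (a : R) : Prop :=
  exists b, is_MP_inverse star a b.

Definition group_invertible (R : pzRingType) (a : R) : Prop :=
  exists b, [/\ a * b * a = a, b * a * b = b & a * b = b * a].

Definition is_projection (R : pzRingType) (star : R -> R) (e : R) : Prop :=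
  e * e = e /\ star e = e.

(* Main.v *)
Require Import Defs.
From mathcomp Require Import all_boot all_algebra.
Local Open Scope ring_scope.
Import GRing.Theory.

Theorem lemma2p8 (R : pzRingType) (star : R -> R) (a adag x : R) :
  involution star ->
  group_invertible a ->
  is_MP_inverse star a adag ->
  is_projection star x ->
  x = a * adag * x * adag * a ->
  is_projection star (adag * a * x * a * adag).
Proof.
move=> [_ _ sM] _ [h1 h2 sq sp] [xx xs] hx.
have hx2 : x = adag * a * x * (a * adag).
  have e : x = (a * adag) * x * (adag * a) by rewrite mulrA -hx.
  transitivity (star x); first by rewrite xs.
  by rewrite {1}e (sM (a * adag * x)) (sM (a * adag)) sq sp xs mulrA.
have hy : adag * a * x * a * adag = x.
  rewrite hx2 -!mulrA.
  have e1 : adag * (a * (adag * (a * (x * (a * (adag * (a * adag)))))))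
          = (adag * a * adag) * a * x * (a * adag * a) * adag by rewrite !mulrA.
  by rewrite e1 h1 h2 !mulrA.
by rewrite hy.
Qed.
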